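(* Let $q$ be a prime power, let $l\ge 1$ and $r_1,\ldots,r_l\ge 1$ be integers, let $\alpha_1,\ldots,\alpha_l$ be pairwise distinct elements of $\mathbb{F}_q^*$, and let $\gamma\in\mathbb{F}_q$. Consider the system in the $r_1+\cdots+r_l$ unknowns $x^{(i)}_j$ ($1\le i\le l$, $1\le j\le r_i$) over $\mathbb{F}_q$: $$\sum_{i=1}^l\sum_{j=1}^{r_i}x^{(i)}_j=\gamma,\qquad \sum_{i=1}^l\alpha_i\sum_{j=1}^{r_i}x^{(i)}_j=0,\qquad \prod_{i,j}x^{(i)}_j\neq 0.$$ For $l=1$ the number of solutions is $A_{r_1}=\psi_{r_1}$ if $\gamma=0$ and $0$ if $\gamma\ne 0$. For $l>1$ the number of solutions is $A_{r_1,\ldots,r_l}$ if $\gamma=0$ and $(\psi_{r_1+\cdots+r_l}-A_{r_1,\ldots,r_l})/(q-1)$ if $\gamma\neq 0$, where $A_{r_1,\ldots,r_l}$ is defined recursively by $$A_{r_1}=\psi_{r_1},\qquad A_{r_1,\ldots,r_l}=\psi_{r_1+\cdots+r_{l-1}}\varphi_{r_l}+(-1)^{r_l}A_{r_1,\ldots,r_{l-1}}.$$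
   Context: For an integer $m\ge 0$, $\psi_m$ denotes the number of $(x_1,\ldots,x_m)\in\mathbb{F}_q^m$ with $\sum_{i=1}^m x_i=0$ and all $x_i\ne 0$, and $\varphi_m$ denotes the number of $(x_1,\ldots,x_m)\in\mathbb{F}_q^m$ with $\sum_{i=1}^m x_i=1$ and all $x_i\neq 0$ (so $\psi_0=1$, $\varphi_0=0$). *)

(* Defs.v *)
From HB Require Import structures.
From mathcomp Require Import all_boot all_order all_algebra.
Set Implicit Arguments. Unset Strict Implicit. Unset Printing Implicit Defensive.
Import Order.TTheory GRing.Theory Num.Theory.
Local Open Scope ring_scope.

Definition psi (F : finFieldType) (m : nat) : nat :=
  #|[set x : {ffun 'I_m -> F} | (\sum_(i < m) x i == 0) && [forall i, x i != 0]]|.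

Definition phi (F : finFieldType) (m : nat) : nat :=
  #|[set x : {ffun 'I_m -> F} | (\sum_(i < m) x i == 1) && [forall i, x i != 0]]|.

(* A on the REVERSED list [:: r_l; r_{l-1}; ...; r_1]:
   A_{r1} = psi r1,  A_{r1..rl} = psi(r1+..+r_{l-1}) phi(r_l) + (-1)^{r_l} A_{r1..r_{l-1}} *)
Fixpoint Arev (F : finFieldType) (s : seq nat) : int :=
  match s with
  | [::] => 0
  | [:: x] => (psi F x)%:Z
  | x :: s' => (psi F (sumn s'))%:Z * (phi F x)%:Z + (-1) ^+ x * Arev F s'
  end.

Definition A (F : finFieldType) (r : seq nat) : int := Arev F (rev r).

(* index type of the unknowns x^{(i)}_j, 1<=i<=l, 1<=j<=r_i (0-based here) *)
Definition unk (r : seq nat) : finType := {i : 'I_(size r) & 'I_(nth 0%N r i)}.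

Definition unk_at (r : seq nat) (i : 'I_(size r)) (j : 'I_(nth 0%N r i)) : unk r :=
  @Tagged 'I_(size r) i (fun i : 'I_(size r) => 'I_(nth 0%N r i)) j.

Definition sols (F : finFieldType) (r : seq nat) (alpha : 'I_(size r) -> F)
    (gamma : F) : {set {ffun unk r -> F}} :=
  [set x : {ffun unk r -> F} |
    [&& \sum_(i < size r) \sum_(j < nth 0%N r i) x (unk_at j) == gamma,
        \sum_(i < size r) alpha i * \sum_(j < nth 0%N r i) x (unk_at j) == 0
      & [forall k, x k != 0]]].

(* Main.v *)
Require Import Defs.
From HB Require Import structures.
From mathcomp Require Import all_boot all_order all_algebra.
Set Implicit Arguments. Unset Strict Implicit. Unset Printing Implicit Defensive.
Import Order.TTheory GRing.Theory Num.Theory.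
Local Open Scope ring_scope.

Lemma card_bij (T U : finType) (A : {set T}) (B : {set U}) (f : T -> U) (g : U -> T) :
  {in A, forall x, f x \in B} -> {in B, forall y, g y \in A} ->
  {in A, cancel f g} -> {in B, cancel g f} -> #|A| = #|B|.
Proof.
move=> fAB gBA fK gK; apply/eqP; rewrite eqn_leq; apply/andP; split.
  rewrite -(card_in_imset (f:=f) (D:=A)); last by move=> x y xA yA /(congr1 g); rewrite !fK.
  by apply: subset_leq_card; apply/subsetP=> _ /imsetP[x xA ->]; apply: fAB.
rewrite -(card_in_imset (f:=g) (D:=B)); last by move=> x y xA yA /(congr1 f); rewrite !gK.
by apply: subset_leq_card; apply/subsetP=> _ /imsetP[x xA ->]; apply: gBA.
Qed.

Section Gen.
Variables (F : finFieldType) (I : finType).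

Definition S (D : {set I}) := [set x : {ffun I -> F} | [forall k, (x k != 0) == (k \in D)]].

Lemma inS D x : (x \in S D) = [forall k, (x k != 0) == (k \in D)].
Proof. by rewrite inE. Qed.

Lemma S_out D x k : x \in S D -> k \notin D -> x k = 0.
Proof. by rewrite inS => /forallP/(_ k)/eqP; case: (x k =P 0) => // _ <-. Qed.

Lemma S_in D x k : x \in S D -> k \in D -> x k != 0.
Proof. by rewrite inS => /forallP/(_ k)/eqP ->. Qed.

Lemma sum_S D x (c : I -> F) : x \in S D -> \sum_k c k * x k = \sum_(k in D) c k * x k.
Proof.
move=> xS; rewrite [LHS](bigID (mem D)) /= [X in _ + X]big1 ?addr0 // => k kD.
by rewrite (S_out xS kD) mulr0.
Qed.

Lemma sum_S1 D x : x \in S D -> \sum_k x k = \sum_(k in D) x k.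
Proof.
move=> xS; rewrite [LHS](bigID (mem D)) /= [X in _ + X]big1 ?addr0 // => k kD.
by rewrite (S_out xS kD).
Qed.

Lemma L0 (D : {set I}) (c : I -> F) (t u : F) : u != 0 -> {in D, forall k, c k != 0} ->
  #|[set x in S D | \sum_k c k * x k == t]| =
  #|[set y : {ffun 'I_#|D| -> F} | (\sum_i y i == u * t) && [forall i, y i != 0]]|.
Proof.
move=> u0 c0.
pose ev := @enum_val I (mem D).
pose f (x : {ffun I -> F}) := [ffun i : 'I_#|D| => u * c (ev i) * x (ev i)].
pose g (y : {ffun 'I_#|D| -> F}) := [ffun k => if [pick i | ev i == k] is Some i
   then y i / (u * c k) else 0].
have evD i : ev i \in D by apply: enum_valP.
have pickin k : k \in D -> exists2 i, ev i = k & [pick i | ev i == k] = Some i.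
  move=> kD; case: pickP => [i /eqP eik | H]; first by exists i.
  by have := H (enum_rank_in kD k); rewrite /ev enum_rankK_in ?eqxx.
have pickout k : k \notin D -> [pick i | ev i == k] = None.
  move=> kD; case: pickP => // i /eqP eik; by have := evD i; rewrite eik (negbTE kD).
have pickev i : [pick j | ev j == ev i] = Some i.
  case: pickP => [j /eqP /enum_val_inj -> // | H]; by have := H i; rewrite eqxx.
have sumf x : x \in S D -> \sum_i f x i = u * \sum_k c k * x k.
  move=> xS; rewrite (sum_S c xS) (big_enum_val (fun k => c k * x k)) mulr_sumr.
  by apply: eq_bigr => i _; rewrite ffunE mulrA.
apply: (card_bij (f := f) (g := g)).
- move=> x; rewrite inE => /andP[xS st]; rewrite inE sumf // (inj_eq (mulfI u0)) st /=.
  apply/forallP => i; rewrite ffunE !mulf_neq0 ?c0 //; exact: S_in xS _.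
- move=> y; rewrite inE => /andP[/eqP sy /forallP y0].
  have gS : g y \in S D.
    rewrite inS; apply/forallP => k; rewrite ffunE.
    case: (boolP (k \in D)) => kD.
      by have [i _ ->] := pickin k kD; rewrite mulf_neq0 ?invr_eq0 ?mulf_neq0 ?c0.
    by rewrite pickout ?eqxx.
  rewrite inE gS /=; rewrite -(inj_eq (mulfI u0)) -sumf //.
  rewrite -sy; apply/eqP/eq_bigr => i _; rewrite !ffunE pickev.
  by rewrite mulrC divfK // mulf_neq0 ?c0.
- move=> x; rewrite inE => /andP[xS _]; apply/ffunP => k; rewrite !ffunE.
  case: (boolP (k \in D)) => kD.
    have [i <- ->] := pickin k kD; rewrite ffunE.
    by rewrite mulrC mulKf // mulf_neq0 ?c0.
  by rewrite pickout // (S_out xS kD).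
- move=> y _; apply/ffunP => i; rewrite !ffunE pickev.
  by rewrite mulrC divfK // mulf_neq0 ?c0.
Qed.


Definition addf (x y : {ffun I -> F}) := [ffun k => x k + y k].
Definition res (D : {set I}) (x : {ffun I -> F}) := [ffun k => if k \in D then x k else 0].

Lemma split_card (D' J : {set I}) (P : pred {ffun I -> F}) : [disjoint D' & J] ->
  #|[set x in S (D' :|: J) | P x]| = \sum_(x' in S D') #|[set y in S J | P (addf x' y)]|.
Proof.
move=> dis.
rewrite (eq_bigr (fun x' => \sum_(y in [set y in S J | P (addf x' y)]) 1)); last first.
  by move=> x' _; rewrite sum1_card.
rewrite pair_big_dep sum1dep_card.
pose f x := (res D' x, res J x). pose g (p : {ffun I -> F} * {ffun I -> F}) := addf p.1 p.2.
have resS (D : {set I}) x : x \in S (D' :|: J) -> D \subset D' :|: J -> res D x \in S D.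
  move=> xS sD; rewrite inS; apply/forallP => k; rewrite ffunE.
  case: (boolP (k \in D)) => kD; last by rewrite eqxx.
  by rewrite (S_in xS) // (subsetP sD).
have addK x : x \in S (D' :|: J) -> addf (res D' x) (res J x) = x.
  move=> xS; apply/ffunP => k; rewrite !ffunE.
  case: (boolP (k \in D')) => kD'.
    by rewrite (disjointFr dis kD') addr0.
  case: (boolP (k \in J)) => kJ; first by rewrite add0r.
  by rewrite addr0 (S_out xS) // inE negb_or kD'.
have addS x y : x \in S D' -> y \in S J -> addf x y \in S (D' :|: J).
  move=> xS yS; rewrite inS; apply/forallP => k; rewrite ffunE inE.
  case: (boolP (k \in D')) => kD'.
    by rewrite (S_out yS) ?(disjointFr dis kD') // addr0 (S_in xS).
  by rewrite (S_out xS) // add0r /=; apply/eqP; case: (boolP (k \in J)) => kJ;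
    [rewrite (S_in yS) | rewrite (S_out yS) ?eqxx].
have resL x y : x \in S D' -> y \in S J -> res D' (addf x y) = x.
  move=> xS yS; apply/ffunP => k; rewrite !ffunE.
  case: (boolP (k \in D')) => kD'; last by rewrite (S_out xS).
  by rewrite (S_out yS) ?(disjointFr dis kD') // addr0.
have resR x y : x \in S D' -> y \in S J -> res J (addf x y) = y.
  move=> xS yS; apply/ffunP => k; rewrite !ffunE.
  case: (boolP (k \in J)) => kJ; last by rewrite (S_out yS).
  by rewrite (S_out xS) ?(disjointFl dis kJ) // add0r.
apply: (card_bij (f:=f) (g:=g)).
- move=> x; rewrite inE => /andP[xS Px]; rewrite inE /=; apply/andP; split; first exact: resS (subsetUl _ _).
  by rewrite inE resS ?subsetUr //= addK.
- move=> [x y]; rewrite inE /= => /andP[xS]; rewrite inE => /andP[yS Pxy].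
  by rewrite inE addS.
- by move=> x; rewrite inE => /andP[xS _]; rewrite /g /f /= addK.
- move=> [x y]; rewrite inE /= => /andP[xS]; rewrite inE => /andP[yS Pxy].
  by rewrite /f /g /= resL // resR.
Qed.


Lemma Lpsi (D : {set I}) (c : I -> F) : {in D, forall k, c k != 0} ->
  #|[set x in S D | \sum_k c k * x k == 0]| = psi F #|D|.
Proof. by move=> c0; rewrite (L0 _ _ (u := 1)) ?oner_neq0 // mulr0. Qed.

Lemma Lphi (D : {set I}) (c : I -> F) t : t != 0 -> {in D, forall k, c k != 0} ->
  #|[set x in S D | \sum_k c k * x k == t]| = phi F #|D|.
Proof. by move=> t0 c0; rewrite (L0 _ _ (u := t^-1)) ?invr_eq0 // mulVf. Qed.

Definition N (D : {set I}) (t : F) := #|[set x in S D | \sum_k x k == t]|.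

Lemma N_c D t : N D t = #|[set x in S D | \sum_k (fun=> 1) k * x k == t]|.
Proof. apply: eq_card => x; rewrite !inE; congr (_ && (_ == _)); apply: eq_bigr => k _; exact: (esym (mul1r _)). Qed.

Lemma sum_nat_card (T : finType) (A : {set T}) (b : pred T) :
  \sum_(x in A) (b x : nat) = #|[set x in A | b x]|.
Proof.
rewrite -sum1dep_card big_mkcondr /=; apply: eq_bigr => x _; by case: (b x).
Qed.

Lemma N0 t : N set0 t = (t == 0).
Proof.
have S0 x : x \in S set0 -> x = 0.
  by move=> xS; apply/ffunP => k; rewrite (S_out xS) ?inE // ffunE.
case: (t =P 0) => [->|/eqP t0]; rewrite /N ?eqxx ?(negbTE t0).
  apply/eqP/cards1P; exists 0; apply/setP => x; rewrite inE in_set1.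
  apply/andP/eqP => [[xS _]|->]; first exact: S0.
  split; last by rewrite big1 // => k _; rewrite ffunE.
  by rewrite inS; apply/forallP => k; rewrite ffunE inE eqxx.
apply/eqP; rewrite cards_eq0; apply/eqP/setP => x; rewrite inE in_set0.
apply/negbTE; apply/negP => /andP[/S0 -> /eqP].
by rewrite big1 => [/esym/eqP|k _]; rewrite ?(negbTE t0) // ffunE.
Qed.

Lemma N_step (D : {set I}) k t : k \notin D ->
  N (D :|: [set k]) t + N D t = #|S D|.
Proof.
move=> kD; rewrite /N split_card; last first.
  by rewrite disjoint_sym disjoints1.
have inner x' : x' \in S D ->
   #|[set y in S [set k] | \sum_j addf x' y j == t]| = (\sum_j x' j != t).
  move=> x'S.
  have sy y : y \in S [set k] -> \sum_j y j = y k.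
    move=> yS; have := sum_S (fun=> 1) yS; under eq_bigr do rewrite mul1r.
    by move=> ->; rewrite big_set1 mul1r.
  have E : [set y in S [set k] | \sum_j addf x' y j == t] =
           [set y in S [set k] | y k == t - \sum_j x' j].
    apply/setP => y; rewrite inE [RHS]inE; case: (boolP (y \in S [set k])) => //= yS.
    rewrite (eq_bigr (fun j => x' j + y j)) => [|j _]; last by rewrite ffunE.
    rewrite big_split /= (sy y) //; apply/eqP/eqP => [<-|->]; first by rewrite addrC addrK.
    by rewrite addrC subrK.
  rewrite E; case: (t - \sum_j x' j =P 0) => [z|/eqP nz].
    have -> : (\sum_j x' j != t) = false by rewrite -subr_eq0 -opprB z oppr0 eqxx.
    apply/eqP; rewrite cards_eq0; apply/eqP/setP => y; rewrite inE in_set0 z.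
    apply/negbTE/negP => /andP[yS /eqP yk].
    by have := S_in yS (set11 k); rewrite yk eqxx.
  have -> : (\sum_j x' j != t).
    by apply/negP => /eqP e; move: nz; rewrite e subrr eqxx.
  apply/eqP/cards1P; exists [ffun j => if j == k then t - \sum_j x' j else 0].
  apply/setP => y; rewrite inE in_set1; apply/andP/eqP => [[yS /eqP yk]|->].
    apply/ffunP => j; rewrite ffunE; case: (j =P k) => [->//|/eqP jk].
    by rewrite (S_out yS) // inE.
  split; last by rewrite ffunE eqxx.
  rewrite inS; apply/forallP => j; rewrite ffunE inE.
  by case: (j == k); rewrite ?nz ?eqxx.
rewrite (eq_bigr _ inner).
rewrite sum_nat_card.
rewrite -(cardsID [set x : {ffun I -> F} | \sum_j x j != t] (S D)); congr (_ + _).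
  by apply/eq_card => x; rewrite !inE andbC.
by apply: eq_card => x; rewrite !inE negbK andbC.
Qed.


Lemma N_diff (D : {set I}) : (N D 0)%:Z - (N D 1)%:Z = (-1) ^+ #|D|.
Proof.
move: {2}#|D| (erefl #|D|) => n; elim: n D => [|n IH] D cD.
  move/eqP: cD; rewrite cards_eq0 => /eqP ->.
  by rewrite !N0 eqxx oner_eq0 cards0.
have [k kD] : exists k, k \in D.
  by apply/set0Pn; rewrite -card_gt0 cD.
have kD' : k \notin D :\ k by rewrite setD11.
have h (t : F) : (N D t)%:Z = (#|S (D :\ k)|)%:Z - (N (D :\ k) t)%:Z.
  have eD : D = D :\ k :|: [set k] by rewrite setUC setD1K.
  rewrite [in N D t]eD; apply/eqP; rewrite eq_sym subr_eq -PoszD; apply/eqP; congr Posz; exact/esym/N_step.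
have cD' : #|D :\ k| = n by move: cD; rewrite (cardsD1 k D) kD => -[].
by rewrite ?cD !h exprS -cD' -(IH _ cD') mulN1r !opprB addrC addrA subrK.
Qed.

End Gen.

Lemma psi_phi (F : finFieldType) m : (psi F m)%:Z = (phi F m)%:Z + (-1) ^+ m.
Proof.
have := @N_diff F 'I_m setT.
rewrite !N_c (Lpsi (c := fun=> 1)) ?oner_neq0 // (Lphi (c := fun=> 1)) ?oner_neq0 //.
by rewrite cardsT card_ord => <-; rewrite addrC subrK.
Qed.

Section Step.
Variables (F : finFieldType) (I : finType).
Local Notation S := (@S F I).
Local Notation addf := (@addf F I).
Local Notation N := (@N F I).

Definition Z (a : I -> F) (D : {set I}) :=
  #|[set x in S D | (\sum_k x k == 0) && (\sum_k a k * x k == 0)]|.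

Lemma NJ (J : {set I}) (s : F) :
  (N J s)%:Z =
  (phi F #|J|)%:Z + (-1) ^+ #|J| * ((s == 0) : nat)%:R.
Proof.
rewrite N_c; case: (s =P 0) => [->|/eqP s0].
  by rewrite (Lpsi (c := fun=> 1)) ?oner_neq0 // psi_phi mulr1.
by rewrite (Lphi (c := fun=> 1)) ?oner_neq0 // mulr0 addr0.
Qed.

Lemma Z_step (a : I -> F) (D J : {set I}) (al : F) : [disjoint D & J] ->
  {in J, forall k, a k = al} -> {in D, forall k, a k != al} ->
  (Z a (D :|: J))%:Z = (psi F #|D|)%:Z * (phi F #|J|)%:Z + (-1) ^+ #|J| * (Z a D)%:Z.
Proof.
move=> dis aJ aD.
have sumJ y : y \in S J -> \sum_k a k * y k = al * \sum_k y k.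
  move=> yS; rewrite (sum_S _ yS) (sum_S1 yS) mulr_sumr.
  by apply: eq_bigr => k kJ; rewrite aJ.
pose w (x : {ffun I -> F}) := \sum_k (fun k => a k - al) k * x k.
have wE x : w x = \sum_k a k * x k - al * \sum_k x k.
  rewrite /w mulr_sumr -sumrB; apply: eq_bigr => k _; by rewrite mulrBl.
rewrite /Z split_card // -natz natr_sum.
have inner x' : x' \in S D ->
  ((#|[set y in S J | (\sum_k addf x' y k == 0) && (\sum_k a k * addf x' y k == 0)]|)%:R : int) =
  ((w x' == 0) : nat)%:R * ((phi F #|J|)%:Z + (-1) ^+ #|J| * ((\sum_k x' k == 0) : nat)%:R).
  move=> x'S.
  have E : [set y in S J | (\sum_k addf x' y k == 0) && (\sum_k a k * addf x' y k == 0)] =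
           [set y in S J | (w x' == 0) && (\sum_k y k == - \sum_k x' k)].
    apply/setP => y; rewrite inE [RHS]inE; case: (boolP (y \in S J)) => //= yS.
    have sS : \sum_k addf x' y k = \sum_k x' k + \sum_k y k.
      by rewrite -big_split; apply: eq_bigr => k _; rewrite ffunE.
    have sA : \sum_k a k * addf x' y k = \sum_k a k * x' k + \sum_k a k * y k.
      by rewrite -big_split; apply: eq_bigr => k _; rewrite ffunE mulrDr.
    rewrite sS sA (sumJ y) // wE.
    set sx := \sum_k x' k; set sa := \sum_k a k * x' k; set sy := \sum_k y k.
    case: (sy =P - sx) => [->|ne]; first by rewrite andbT addrN eqxx mulrN.
    rewrite andbF addr_eq0; apply/negbTE/negP => /andP[/eqP e _]; apply: ne; by rewrite e opprK.
  rewrite E; case: (w x' =P 0) => [_|_] /=.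
    by rewrite mul1r natz -(oppr_eq0 (\sum_k x' k)) -NJ.
  by rewrite mul0r; apply/eqP; rewrite pnatr_eq0 cards_eq0; apply/eqP/setP => y; rewrite !inE andbF.
rewrite (eq_bigr _ inner).
under eq_bigr do rewrite mulrDr mulrCA -natrM mulnb.
rewrite big_split /= -mulr_suml -mulr_sumr -!natr_sum !sum_nat_card !natz.
congr (Posz _ * _ + _ * Posz _).
  by apply: Lpsi => k kD; rewrite subr_eq0 aD.
apply: eq_card => x; rewrite inE [RHS]inE; case: (boolP (x \in S D)) => //= xS.
rewrite wE; case: (\sum_k x k =P 0) => [->|]; last by rewrite andbF.
by rewrite mulr0 subr0 andbT.
Qed.

End Step.

Lemma sum_unk (F : finFieldType) (r : seq nat) (c : 'I_(size r) -> F) (x : {ffun unk r -> F}) :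
  \sum_(i < size r) c i * \sum_(j < nth 0%N r i) x (unk_at j) = \sum_k c (tag k) * x k.
Proof.
under eq_bigr do rewrite mulr_sumr.
rewrite (@sig_big_dep _ _ _ 'I_(size r) (fun i => 'I_(nth 0%N r i)) xpredT (fun i => xpredT) (fun i (j : 'I_(nth 0%N r i)) => c i * x (unk_at j))) /=.
by apply: eq_bigr => -[i j].
Qed.

Fixpoint B (F : finFieldType) (s : seq nat) : int :=
  match s with
  | [::] => 1
  | x :: s' => (psi F (sumn s'))%:Z * (phi F x)%:Z + (-1) ^+ x * B F s'
  end.

Lemma psi0 (F : finFieldType) : psi F 0 = 1%N.
Proof.
rewrite /psi; transitivity #|{ffun 'I_0 -> F}|; last by rewrite card_ffun card_ord.
apply: eq_card => x; rewrite !inE big_ord0 eqxx /=; by apply/forallP => -[].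
Qed.

Lemma Arev_B (F : finFieldType) s : s != [::] -> Arev F s = B F s.
Proof.
elim: s => [//|x [|y s] IH] _.
  by rewrite /= psi0 mul1r mulr1 psi_phi.
by rewrite /Arev -/(Arev F (y :: s)) IH.
Qed.

Section Main.
Variables (F : finFieldType) (r : seq nat) (alpha : 'I_(size r) -> F).
Hypothesis alpha_inj : injective alpha.
Local Notation I := (unk r).
Local Notation S := (@S F I).
Local Notation Z := (@Z F I).
Definition a (k : I) := alpha (tag k).
Definition Dl (l : nat) := [set k : I | (tag k < l)%N].
Definition Jl (l : nat) := [set k : I | val (tag k) == l].

Lemma Dl_step l : Dl l.+1 = Dl l :|: Jl l.
Proof. by apply/setP => k; rewrite !inE ltnS leq_eqVlt orbC. Qed.

Lemma Dl_dis l : [disjoint Dl l & Jl l].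
Proof.
rewrite -setI_eq0; apply/eqP/setP => k; rewrite !inE; apply/negbTE/negP => /andP[lt /eqP e]; by rewrite e ltnn in lt.
Qed.

Lemma card_Jl l (lt : (l < size r)%N) : #|Jl l| = nth 0%N r l.
Proof.
pose i := Ordinal lt.
have -> : Jl l = [set unk_at j | j : 'I_(nth 0%N r i)].
  apply/setP => k; rewrite !inE; apply/idP/imsetP.
    case: k => i' j /= /eqP e.
    have ei : i' = i by apply: val_inj.
    subst i'; by exists j.
  by move=> [j _ ->].
rewrite card_imset ?card_ord //.
move=> j1 j2 /eqP; rewrite /unk_at eq_Tagged => /eqP //.
Qed.

Lemma card_Dl l : (l <= size r)%N -> #|Dl l| = sumn (take l r).
Proof.
elim: l => [|l IH] lt.
  by rewrite take0 /=; apply/eqP; rewrite cards_eq0; apply/eqP/setP => k; rewrite !inE.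
rewrite Dl_step cardsU (disjoint_setI0 (Dl_dis l)) cards0 subn0 IH ?(ltnW lt) //.
by rewrite card_Jl // (take_nth 0%N lt) sumn_rcons.
Qed.

Lemma Z0 : Z a set0 = 1%N.
Proof.
have S0 x : x \in S set0 -> x = 0.
  by move=> xS; apply/ffunP => k; rewrite (S_out xS) ?inE // ffunE.
apply/eqP/cards1P; exists 0; apply/setP => x; rewrite inE in_set1.
apply/andP/eqP => [[xS _]|->]; first exact: S0.
split; last by rewrite !big1 ?eqxx // => k _; rewrite ffunE ?mulr0.
by rewrite inS; apply/forallP => k; rewrite ffunE inE eqxx.
Qed.

Lemma Z_Dl l : (l <= size r)%N -> (Z a (Dl l))%:Z = B F (rev (take l r)).
Proof.
elim: l => [|l IH] lt.
  have -> : Dl 0 = set0 by apply/setP => k; rewrite !inE.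
  by rewrite Z0 take0.
rewrite Dl_step (Z_step (al := alpha (Ordinal lt))) ?Dl_dis //.
- rewrite IH ?(ltnW lt) // (take_nth 0%N lt) rev_rcons /= sumn_rev card_Jl //.
  by rewrite card_Dl ?(ltnW lt).
- by move=> k; rewrite inE => /eqP e; rewrite /a; congr alpha; apply: val_inj.
- move=> k; rewrite inE => kl; rewrite /a (inj_eq alpha_inj); apply/eqP => e.
  by move: kl; rewrite e /= ltnn.
Qed.


Hypothesis alpha0 : forall i, alpha i != 0.

Definition C (g : F) := #|[set x in S setT | (\sum_k x k == g) && (\sum_k a k * x k == 0)]|.

Lemma sum_unk1 (x : {ffun I -> F}) :
  \sum_(i < size r) \sum_(j < nth 0%N r i) x (unk_at j) = \sum_k x k.
Proof.
rewrite (@sig_big_dep _ _ _ 'I_(size r) (fun i => 'I_(nth 0%N r i)) xpredT (fun i => xpredT) (fun i (j : 'I_(nth 0%N r i)) => x (unk_at j))) /=.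
by apply: eq_bigr => -[i j].
Qed.

Lemma sols_C g : #|sols alpha g| = C g.
Proof.
apply: eq_card => x; rewrite /sols /C inE [RHS]inE inS sum_unk1 (sum_unk alpha).
have -> : [forall k, (x k != 0) == (k \in [set: I])] = [forall k, x k != 0].
  by apply: eq_forallb => k; rewrite inE eqb_id.
by case: [forall k, x k != 0]; rewrite ?andbT ?andbF.
Qed.

Lemma Dl_full : Dl (size r) = setT.
Proof. by apply/setP => k; rewrite !inE ltn_ord. Qed.

Lemma C0 : (0 < size r)%N -> (C 0)%:Z = A F r.
Proof.
move=> sr; have := Z_Dl (leqnn (size r)); rewrite Dl_full take_size /A Arev_B //.
by rewrite -size_eq0 size_rev -lt0n.
Qed.

Lemma card_I : #|[set: I]| = sumn r.
Proof. by rewrite -Dl_full card_Dl // take_size. Qed.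

Lemma C_scale g : g != 0 -> C g = C 1.
Proof.
move=> g0.
apply: (card_bij (f := fun x : {ffun I -> F} => [ffun k => g^-1 * x k])
                 (g := fun x : {ffun I -> F} => [ffun k => g * x k])).
- move=> x; rewrite inE => /andP[xS /andP[/eqP sx /eqP sa]].
  rewrite inE; apply/andP; split.
    rewrite inS; apply/forallP => k; rewrite ffunE mulf_eq0 invr_eq0 (negbTE g0) /=.
    by move: xS; rewrite inS => /forallP/(_ k).
  apply/andP; split; apply/eqP.
    by rewrite (eq_bigr (fun k => g^-1 * x k)) ?(ffunE) -?mulr_sumr ?sx ?mulVf // => k _; rewrite ffunE.
  rewrite (eq_bigr (fun k => g^-1 * (a k * x k))) -?mulr_sumr ?sa ?mulr0 // => k _.
  by rewrite ffunE mulrCA.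
- move=> x; rewrite inE => /andP[xS /andP[/eqP sx /eqP sa]].
  rewrite inE; apply/andP; split.
    rewrite inS; apply/forallP => k; rewrite ffunE mulf_eq0 (negbTE g0) /=.
    by move: xS; rewrite inS => /forallP/(_ k).
  apply/andP; split; apply/eqP.
    by rewrite (eq_bigr (fun k => g * x k)) -?mulr_sumr ?sx ?mulr1 // => k _; rewrite ffunE.
  rewrite (eq_bigr (fun k => g * (a k * x k))) -?mulr_sumr ?sa ?mulr0 // => k _.
  by rewrite ffunE mulrCA.
- by move=> x _; apply/ffunP => k; rewrite !ffunE mulrA mulfV // mul1r.
- by move=> x _; apply/ffunP => k; rewrite !ffunE mulrA mulVf // mul1r.
Qed.

Lemma sum_C : (\sum_g C g)%N = psi F (sumn r).
Proof.
rewrite -card_I -(Lpsi (D := setT) (c := a)); last by move=> k _; exact: alpha0.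
rewrite /C.
under eq_bigr do rewrite -sum_nat_card.
rewrite exchange_big /= -sum_nat_card; apply: eq_bigr => x _.
set s := (\sum_k x k)%R; set P := (_ == 0)%R.
rewrite (@bigD1 _ _ _ _ s xpredT (fun i => ((s == i) && P : nat))) //= eqxx /= big1 ?addn0 //.
by move=> g ne; rewrite eq_sym (negbTE ne).
Qed.

End Main.

Unset Implicit Arguments.

Theorem proposition2p2 (F : finFieldType) (r : seq nat)
    (alpha : 'I_(size r) -> F) (gamma : F) :
  (0 < size r)%N ->
  (forall i : 'I_(size r), (1 <= nth 0%N r i)%N) ->
  injective alpha ->
  (forall i, alpha i != 0) ->
  (size r = 1%N ->
     (#|sols alpha gamma|%:Q =
        if gamma == 0 then (A F r)%:~R else 0)) /\
  ((1 < size r)%N ->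
     (#|sols alpha gamma|%:Q =
        if gamma == 0 then (A F r)%:~R
        else ((psi F (sumn r))%:Q - (A F r)%:~R) / (#|F|%:Q - 1))).
Proof.
move=> sr _ inj a0.
have case0 : gamma = 0 -> #|sols alpha gamma|%:Q = (A F r)%:~R.
  by move=> ->; rewrite sols_C -(C0 inj sr).
split.
  move=> s1; case: (gamma =P 0) => [g0|/eqP g0]; first exact: case0.
  rewrite sols_C; apply/eqP; rewrite pnatr_eq0 cards_eq0; apply/eqP/setP => x.
  rewrite inE [RHS]inE; apply/negbTE/negP => /andP[xS /andP[/eqP sx /eqP sa]].
  pose i0 : 'I_(size r) := Ordinal sr.
  have ti k : tag k = i0.
    have h : (val (tag k) < 1)%N by rewrite -[X in (_ < X)%N]s1 ltn_ord.
    apply: val_inj => /=; move: h; rewrite ltnS leqn0 => /eqP.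
    by rewrite /i0 /=.
  move: sa; rewrite (eq_bigr (fun k => alpha i0 * x k)) => [|k _]; last by rewrite /a ti.
  by rewrite -mulr_sumr sx => /eqP; rewrite mulf_eq0 (negbTE (a0 i0)) (negbTE g0).
move=> s2; case: (gamma =P 0) => [g0|/eqP g0]; first exact: case0.
have q0 : (0 < #|F|)%N by apply/card_gt0P; exists 0.
have e := sum_C a0.
rewrite (bigD1 0) //= (eq_bigr (fun=> C alpha 1)) in e; last by move=> g /C_scale; apply.
rewrite sum_nat_cond_const in e.
have cq : #|[set x : F | true && (x != 0)]| = #|F|.-1.
  by rewrite -(cardsC1 (0 : F)); apply: eq_card => x; rewrite !inE.
rewrite cq in e.
rewrite sols_C C_scale // -(C0 inj sr) -e -!pmulrn natrD natrM /=.
have m0 : (#|F|.-1)%:R != 0 :> rat.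
  rewrite pnatr_eq0 -lt0n -ltnS prednK //; apply/card_gt1P; exists 0, 1.
  by rewrite !inE eq_sym oner_neq0.
rewrite -[in #|F|%:R](prednK q0) -addn1 natrD addrK.
by rewrite addrC addKr mulrC mulKf.
Qed.
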